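(* Let $(f_k(t))_{k=0,\ldots,n}$, $t\in[0,1]$, be a constant speed path with speed $v\neq 0$ and coefficients $\boldsymbol\alpha\in\mathcal A$, with $f_k(t)>0$ for all $k,t$, $f_k$ twice continuously differentiable and $\alpha_k$ continuously differentiable in $t$. Let $t^*\in(0,1)$ and suppose that at $t=t^*$: (1) $\alpha_k\le\alpha_{k+1}$ for all $k=0,\ldots,n-1$; (3) $\alpha_{k+1}(1-\alpha_{k+1})f_{k+1}^2-\alpha_{k+2}(1-\alpha_k)f_kf_{k+2}\ge0$ for all $k=0,\ldots,n-2$; (4) for all $k=0,\ldots,n-2$ we have $f_{k+1}^2-f_kf_{k+2}>0$ and $h_k\le\widetilde h_k$, where $$\widetilde h_k:=\frac{2g_kg_{k+1}f_{k+1}-g_k^2f_{k+2}-g_{k+1}^2f_k}{f_{k+1}^2-f_kf_{k+2}}$$ and $$h_k:=(1-\alpha_k)(1-\alpha_{k+1})f_k+2\alpha_{k+1}(1-\alpha_{k+1})f_{k+1}+\alpha_{k+1}\alpha_{k+2}f_{k+2}-\frac1v f_{k+1}\frac{\partial\alpha_{k+1}}{\partial t}$$ (all evaluated at $t^*$). Then the entropy $H(t)=-\sum_{k=0}^nf_k(t)\log f_k(t)$ satisfies $H''(t^* )\le0$.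
   Context: Fix an integer $n\ge1$. For a sequence $(a_k)_{k\in\mathbb Z}$ write $\nabla_1 a_k=a_k-a_{k-1}$. Functions indexed by $k$ are extended by $0$ outside their stated index range. $\mathcal A$ denotes the set of measurable $\boldsymbol\alpha(t)=(\alpha_0(t),\ldots,\alpha_n(t))$, $t\in[0,1]$, with $\alpha_0\equiv0$, $\alpha_n\equiv1$ and $0\le\alpha_k(t)\le1$ for all $k,t$. A family $(f_k(t))_{k=0,\ldots,n}$ of probability mass functions on $\{0,\ldots,n\}$ is a constant speed path with speed $v\in\mathbb R$ and coefficients $\boldsymbol\alpha\in\mathcal A$ if $\frac{\partial f_k}{\partial t}(t)=-v\,\nabla_1 g_k(t)$ for $k=0,\ldots,n$, where $g_k(t)=\alpha_{k+1}(t)f_{k+1}(t)+(1-\alpha_k(t))f_k(t)$ for $k=0,\ldots,n-1$ and $g_k=0$ for $k\notin\{0,\ldots,n-1\}$. *)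

(* Defs.v *)
From Stdlib Require Import Reals.
Open Scope R_scope.

Definition gfun (n : nat) (alpha f : nat -> R -> R) (k : nat) (t : R) : R :=
  if Nat.ltb k n then alpha (S k) t * f (S k) t + (1 - alpha k t) * f k t else 0.

(* backward difference nabla_1 g_k = g_k - g_{k-1}, with g_{-1} = 0 *)
Definition nabla_g (n : nat) (alpha f : nat -> R -> R) (k : nat) (t : R) : R :=
  match k with
  | O => gfun n alpha f O t
  | S j => gfun n alpha f (S j) t - gfun n alpha f j t
  end.

Definition in_A (n : nat) (alpha : nat -> R -> R) : Prop :=
  forall t, 0 <= t <= 1 ->
    alpha O t = 0 /\ alpha n t = 1 /\
    (forall k, (k <= n)%nat -> 0 <= alpha k t <= 1).

Definition pmf_family (n : nat) (f : nat -> R -> R) : Prop :=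
  forall t, 0 <= t <= 1 ->
    (forall k, (k <= n)%nat -> 0 <= f k t) /\ sum_f_R0 (fun k => f k t) n = 1.

Definition entropy (n : nat) (f : nat -> R -> R) (t : R) : R :=
  - sum_f_R0 (fun k => f k t * ln (f k t)) n.

Definition h_k (n : nat) (v : R) (alpha f a1 : nat -> R -> R) (k : nat) (t : R) : R :=
  (1 - alpha k t) * (1 - alpha (S k) t) * f k t
  + 2 * alpha (S k) t * (1 - alpha (S k) t) * f (S k) t
  + alpha (S k) t * alpha (S (S k)) t * f (S (S k)) t
  - / v * f (S k) t * a1 (S k) t.

Definition htilde_k (n : nat) (alpha f : nat -> R -> R) (k : nat) (t : R) : R :=
  (2 * gfun n alpha f k t * gfun n alpha f (S k) t * f (S k) t
   - (gfun n alpha f k t)^2 * f (S (S k)) t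
   - (gfun n alpha f (S k) t)^2 * f k t)
  / ((f (S k) t)^2 - f k t * f (S (S k)) t).

(* Main.v *)
Require Import Defs.
From Stdlib Require Import Reals Lra Lia.
Open Scope R_scope.

Lemma dpl_eq (f g : R -> R) x l : (forall t, f t = g t) -> derivable_pt_lim f x l -> derivable_pt_lim g x l.
Proof.
  intros E H eps Heps. destruct (H eps Heps) as [d Hd]. exists d. intros h Hh0 Hh.
  rewrite <- !E. apply Hd; auto.
Qed.

Lemma dpl_l (f : R -> R) x l l' : l = l' -> derivable_pt_lim f x l -> derivable_pt_lim f x l'.
Proof. intros ->; auto. Qed.

Lemma dpl_loc (f g : R -> R) x l d : 0 < d -> (forall t, Rabs (t - x) < d -> f t = g t) ->
  derivable_pt_lim f x l -> derivable_pt_lim g x l.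
Proof.
  intros Hd E H eps Heps. destruct (H eps Heps) as [del Hdel].
  assert (Hm : 0 < Rmin del d) by (apply Rmin_glb_lt; [apply cond_pos|auto]).
  exists (mkposreal _ Hm). simpl. intros h Hh0 Hh.
  assert (Hh1 : Rabs h < del) by (eapply Rlt_le_trans; [exact Hh| apply Rmin_l]).
  assert (Hh2 : Rabs h < d) by (eapply Rlt_le_trans; [exact Hh| apply Rmin_r]).
  rewrite <- !E. apply Hdel; auto.
  - replace (x - x) with 0 by ring. rewrite Rabs_R0. auto.
  - replace (x + h - x) with h by ring. auto.
Qed.

Lemma dplus f g x a b : derivable_pt_lim f x a -> derivable_pt_lim g x b -> derivable_pt_lim (fun t => f t + g t) x (a+b).
Proof. apply derivable_pt_lim_plus. Qed.
Lemma dminus f g x a b : derivable_pt_lim f x a -> derivable_pt_lim g x b -> derivable_pt_lim (fun t => f t - g t) x (a-b).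
Proof. apply derivable_pt_lim_minus. Qed.
Lemma dmult f g x a b : derivable_pt_lim f x a -> derivable_pt_lim g x b -> derivable_pt_lim (fun t => f t * g t) x (a * g x + f x * b).
Proof. apply derivable_pt_lim_mult. Qed.
Lemma dopp f x a : derivable_pt_lim f x a -> derivable_pt_lim (fun t => - f t) x (- a).
Proof. apply derivable_pt_lim_opp. Qed.
Lemma dconst c x : derivable_pt_lim (fun _ => c) x 0.
Proof. apply derivable_pt_lim_const. Qed.
Lemma dlnc u x a : 0 < u x -> derivable_pt_lim u x a -> derivable_pt_lim (fun t => ln (u t)) x (/ u x * a).
Proof. intros Hu H. apply (derivable_pt_lim_comp u ln x a (/ u x) H). apply derivable_pt_lim_ln; auto. Qed.

Lemma dsum (Fk : nat -> R -> R) (dF : nat -> R) x m :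
  (forall k, (k <= m)%nat -> derivable_pt_lim (Fk k) x (dF k)) ->
  derivable_pt_lim (fun t => sum_f_R0 (fun k => Fk k t) m) x (sum_f_R0 dF m).
Proof.
  induction m; intros H.
  - simpl. apply H. lia.
  - simpl. apply dplus. apply IHm. intros; apply H; lia. apply H; lia.
Qed.

Lemma dulnu u x a : 0 < u x -> derivable_pt_lim u x a ->
  derivable_pt_lim (fun t => u t * ln (u t)) x (a * (ln (u x) + 1)).
Proof.
  intros Hu H. eapply dpl_l; [| apply dmult; [exact H| apply dlnc; eauto]].
  cbv beta. field. lra.
Qed.

Lemma dwln u w x a b : 0 < u x -> derivable_pt_lim u x a -> derivable_pt_lim w x b ->
  derivable_pt_lim (fun t => w t * (ln (u t) + 1)) x (b * (ln (u x) + 1) + w x * (a / u x)) .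
Proof.
  intros Hu Ha Hb. eapply dpl_l; [| apply dmult; [exact Hb| apply dplus; [apply dlnc; eauto| apply dconst]]].
  cbv beta. field. lra.
Qed.

Lemma key_ln (r : R) : 1 <= r -> 2 * ln r <= r - / r.
Proof.
  intros Hr. destruct (Req_dec r 1) as [->|Hne].
  { rewrite ln_1, Rinv_1. lra. }
  set (phi := fun y => y - / y - 2 * ln y).
  set (phi' := fun y => 1 + / y ^ 2 - 2 * / y).
  assert (Hd : forall c, 1 <= c <= r -> derivable_pt_lim phi c (phi' c)).
  { intros c Hc.
    assert (Hc0 : 0 < c) by lra.
    assert (H1 : derivable_pt_lim (fun y => / y) c (- / c ^ 2)).
    { assert (Hx := derivable_pt_lim_div (fct_cte 1) id c 0 1 (derivable_pt_lim_const 1 c) (derivable_pt_lim_id c)).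
      assert (Hneq : id c <> 0) by (unfold id; lra).
      specialize (Hx Hneq).
      apply (dpl_eq (fct_cte 1 / id)%F).
      { intro t. unfold div_fct, fct_cte, id. unfold Rdiv. ring. }
      eapply dpl_l; [|exact Hx]. unfold fct_cte, id, Rsqr. field. lra. }
    assert (H2 := derivable_pt_lim_ln c Hc0).
    assert (H3 := derivable_pt_lim_minus _ _ _ _ _ (derivable_pt_lim_minus _ _ _ _ _ (derivable_pt_lim_id c) H1)
                  (derivable_pt_lim_scal _ 2 _ _ H2)).
    apply (dpl_eq _ _ _ _ (fun t => eq_refl _)) in H3.
    eapply dpl_l; [|exact H3]. unfold phi'. field. lra. }
  destruct (MVT_cor2 phi phi' 1 r ltac:(lra) Hd) as [c [Hc1 Hc2]].
  assert (Hp : 0 <= phi' c).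
  { unfold phi'. assert (0 < c) by lra.
    replace (1 + / c ^ 2 - 2 * / c) with ((1 - / c) ^ 2) by (field; lra).
    apply pow2_ge_0. }
  unfold phi in Hc1. rewrite ln_1, Rinv_1 in Hc1.
  assert (0 <= phi' c * (r - 1)) by (apply Rmult_le_pos; lra).
  lra.
Qed.

Lemma div_nonneg a b : 0<=a -> 0<b -> 0 <= a/b.
Proof. intros. unfold Rdiv; apply Rmult_le_pos; [auto| left; apply Rinv_0_lt_compat; auto]. Qed.

Lemma block (a b x g g' h : R): 0<a -> 0<b -> 0<x -> x^2 - a*b > 0 -> 0 <= g -> 0 <= g' ->
  h <= (2*g*g'*x - g^2*b - g'^2*a)/(x^2 - a*b) ->
  (2*ln x - ln a - ln b) * h <= g^2/a + g'^2/b - 2*g*g'/x.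
Proof.
  intros Ha Hb Hx HD Hg Hg' Hh.
  set (u := sqrt a). set (w := sqrt b).
  assert (Hu : 0 < u) by (apply sqrt_lt_R0; lra).
  assert (Hw : 0 < w) by (apply sqrt_lt_R0; lra).
  assert (Hua : u * u = a) by (apply sqrt_sqrt; lra).
  assert (Hwb : w * w = b) by (apply sqrt_sqrt; lra).
  set (s := u * w).
  assert (Hs : 0 < s) by (unfold s; nra).
  assert (Hss : s * s = a * b) by (unfold s; rewrite <- Hua, <- Hwb; ring).
  assert (Hsx : s < x) by nra.
  assert (Hlab : ln a + ln b = 2 * ln s).
  { rewrite <- ln_mult by lra. rewrite <- Hss. rewrite ln_mult by lra. ring. }
  assert (Hlx : ln x = ln (x / s) + ln s).
  { rewrite <- ln_mult. f_equal. field. lra. apply Rdiv_lt_0_compat; lra. lra. }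
  set (D := 2*ln x - ln a - ln b).
  assert (HDr : D = 2 * ln (x / s)) by (unfold D; lra).
  assert (Hr1 : 1 < x / s) by (apply (Rmult_lt_reg_r s); [lra|]; unfold Rdiv; rewrite Rmult_assoc, Rinv_l by lra; lra).
  assert (HD0 : 0 < D).
  { rewrite HDr. assert (ln 1 < ln (x/s)) by (apply ln_increasing; lra). rewrite ln_1 in H. lra. }
  assert (HDle : D <= x / s - / (x / s)) by (rewrite HDr; apply key_ln; lra).
  set (Dl := x^2 - a*b).
  set (t := D / Dl).
  assert (HDl : 0 < Dl) by (unfold Dl; lra).
  assert (Ht0 : 0 < t) by (unfold t; apply Rdiv_lt_0_compat; lra).
  assert (Ht1 : t * x * s <= 1).
  { unfold t. replace (x / s - / (x / s)) with (Dl / (x * s)) in HDle.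
    2:{ unfold Dl. rewrite <- Hss. field. lra. }
    apply (Rmult_le_compat_r (x * s / Dl)) in HDle.
    2:{ apply div_nonneg; [nra|unfold Dl; lra]. }
    replace (Dl / (x * s) * (x * s / Dl)) with 1 in HDle by (field; unfold Dl; split; lra).
    replace (D / Dl * x * s) with (D * (x * s / Dl)) by (field; unfold Dl; lra). exact HDle. }
  apply Rle_trans with (D * ((2*g*g'*x - g^2*b - g'^2*a)/Dl)).
  { apply Rmult_le_compat_l. lra. exact Hh. }
  replace (D * ((2*g*g'*x - g^2*b - g'^2*a)/Dl)) with (t * (2*g*g'*x - g^2*b - g'^2*a))
    by (unfold t; field; unfold Dl; lra).
  rewrite <- Hua, <- Hwb.
  assert (E : g ^ 2 / (u * u) + g' ^ 2 / (w * w) - 2 * g * g' / x - t * (2 * g * g' * x - g ^ 2 * (w * w) - g' ^ 2 * (u * u))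
     = ((w*g - u*g')^2 * x * (1 + t*s^2) + 2*s*(g*g')*(x-s)*(1 - t*x*s)) / (u*u*w*w*x)).
  { unfold s. field. lra. }
  assert (0 <= ((w*g - u*g')^2 * x * (1 + t*s^2) + 2*s*(g*g')*(x-s)*(1 - t*x*s)) / (u*u*w*w*x)).
  { apply div_nonneg.
    - assert (0 <= (w*g - u*g')^2) by apply pow2_ge_0.
      assert (0 <= (w*g - u*g')^2 * x * (1 + t*s^2)) by (apply Rmult_le_pos; [apply Rmult_le_pos; lra| nra]).
      assert (0 <= g*g') by nra.
      assert (0 <= 2*s*(g*g')*(x-s)*(1 - t*x*s)).
      { apply Rmult_le_pos; [apply Rmult_le_pos; [apply Rmult_le_pos|]|]; nra. }
      lra.
    - assert (0 < u*u*w*w) by (apply Rmult_lt_0_compat; [nra|lra]). nra. }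
  lra.
Qed.

Definition nb (X : nat -> R) (k : nat) : R :=
  match k with O => X O | S j => X (S j) - X j end.

Lemma tele (E Rr w : nat -> R) (b : R) :
  E 0%nat = b + w 1%nat -> (forall k, E (S k) = Rr k + w (S (S k)) - w (S k)) ->
  forall M, sum_f_R0 E (S M) = b + w (S (S M)) + sum_f_R0 Rr M.
Proof.
  intros H0 HS. induction M.
  - simpl. rewrite H0, HS. ring.
  - change (sum_f_R0 E (S (S M)) = b + w (S (S (S M))) + (sum_f_R0 Rr M + Rr (S M))).
    simpl sum_f_R0 at 1. simpl in IHM. rewrite IHM, (HS (S M)). ring.
Qed.

Lemma sum_scal_l (c : R) (X : nat -> R) N : sum_f_R0 (fun i => c * X i) N = c * sum_f_R0 X N.
Proof. induction N; simpl; [ring| rewrite IHN; ring]. Qed.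

Lemma sum_nonneg (X : nat -> R) N : (forall i, (i <= N)%nat -> 0 <= X i) -> 0 <= sum_f_R0 X N.
Proof. intros H. induction N; simpl. apply H; lia. assert (0 <= X (S N)) by (apply H; lia).
  assert (0 <= sum_f_R0 X N) by (apply IHN; intros; apply H; lia). lra. Qed.

Lemma alg (n:nat) (Hn: (1<=n)%nat) (v:R) (Hv: v<>0) (F A Ad G fd Gd fdd : nat -> R)
 (HF: forall k, (k<=n)%nat -> 0 < F k)
 (HA0: A 0%nat = 0) (HAn: A n = 1) (HAd0: Ad 0%nat = 0) (HAdn : Ad n = 0)
 (HG: forall k, (k<n)%nat -> G k = A (S k) * F (S k) + (1 - A k) * F k) (HGn: G n = 0)
 (HGp: forall k, (k<n)%nat -> 0 <= G k)
 (Hfd: forall k, (k<=n)%nat -> fd k = -v * nb G k)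
 (HGd: forall k, (k<n)%nat -> Gd k = Ad (S k)*F (S k) + A (S k) * fd (S k) - Ad k * F k + (1 - A k) * fd k)
 (HGdn: Gd n = 0)
 (Hfdd: forall k, (k<=n)%nat -> fdd k = -v * nb Gd k)
 (H4: forall k, (k+2<=n)%nat -> F (S k)^2 - F k * F (S (S k)) > 0 /\
   (1 - A k)*(1 - A (S k))*F k + 2*A (S k)*(1-A (S k))*F (S k) + A (S k)*A (S (S k))*F (S (S k))
     - /v * F (S k) * Ad (S k)
   <= (2*G k*G (S k)*F (S k) - (G k)^2*F (S (S k)) - (G (S k))^2 * F k)/((F (S k))^2 - F k * F (S (S k)))) :
 - sum_f_R0 (fun k => fdd k * (ln (F k) + 1) + fd k * (fd k / F k)) n <= 0.
Proof.
  rewrite plus_sum.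
  set (c := fun k => ln (F k)).
  set (Q := sum_f_R0 (fun k => nb G k ^ 2 / F k) n).
  assert (HS2 : sum_f_R0 (fun k => fd k * (fd k / F k)) n = v^2 * Q).
  { unfold Q. rewrite <- sum_scal_l. apply sum_eq. intros i Hi. rewrite (Hfd i Hi).
    assert (0 < F i) by (apply HF; lia). field. lra. }
  assert (HQ : 0 <= Q).
  { apply sum_nonneg. intros i Hi. assert (0 < F i) by (apply HF; lia).
    apply div_nonneg; [apply pow2_ge_0|auto]. }
  rewrite HS2.
  destruct n as [|N]; [lia|].
  assert (HS1a : sum_f_R0 (fun k => fdd k * (ln (F k) + 1)) (S N) = -v * sum_f_R0 (fun k => nb Gd k * (c k + 1)) (S N)).
  { rewrite <- sum_scal_l. apply sum_eq. intros i Hi. rewrite (Hfdd i Hi). unfold c. ring. }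
  rewrite (tele (fun k => nb Gd k * (c k + 1)) (fun k => Gd k * (c k - c (S k)))
             (fun j => match j with O => 0 | S j => Gd j * (c j + 1) end) 0) in HS1a.
  2:{ simpl. ring. }
  2:{ intros k. simpl. ring. }
  rewrite HGdn in HS1a.
  set (E2 := fun k => ((Ad (S k)*F (S k) - Ad k*F k) - v*A (S k)*(G (S k) - G k) - v*(1 - A k)*nb G k) * (c k - c (S k))).
  assert (HE2 : sum_f_R0 (fun k => Gd k * (c k - c (S k))) N = sum_f_R0 E2 N).
  { apply sum_eq. intros i Hi. unfold E2. rewrite (HGd i), (Hfd (S i)), (Hfd i) by lia. simpl nb. ring. }
  rewrite HE2 in HS1a.
  destruct N as [|M].
  { assert (E0 : sum_f_R0 E2 0 = 0).
    { simpl. unfold E2. rewrite HA0, HAd0, HAn, HAdn, HGn. simpl nb. ring. }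
    rewrite E0 in HS1a. rewrite HS1a.
    assert (0 <= v^2) by apply pow2_ge_0. nra. }
  rewrite (tele E2 (fun m => ((c (S m) - c (S (S m))) - (c m - c (S m))) * (-(Ad (S m)*F (S m)) + v*(A (S m)*G (S m) + (1 - A (S m))*G m)))
       (fun j => match j with O => 0 | S j => (c j - c (S j)) * (Ad (S j)*F (S j) - v*(A (S j)*G (S j) + (1 - A (S j))*G j)) end) 0) in HS1a.
  2:{ unfold E2. rewrite HA0, HAd0. simpl nb. ring. }
  2:{ intros k. unfold E2. simpl nb. ring. }
  rewrite HAn, HAdn, HGn in HS1a.
  set (hh := fun k => (1 - A k)*(1 - A (S k))*F k + 2*A (S k)*(1-A (S k))*F (S k) + A (S k)*A (S (S k))*F (S (S k))
     - /v * F (S k) * Ad (S k)).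
  set (DD := fun k => 2 * ln (F (S k)) - ln (F k) - ln (F (S (S k)))).
  assert (HR : sum_f_R0 (fun m => ((c (S m) - c (S (S m))) - (c m - c (S m))) * (-(Ad (S m)*F (S m)) + v*(A (S m)*G (S m) + (1 - A (S m))*G m))) M
     = v * sum_f_R0 (fun m => DD m * hh m) M).
  { rewrite <- sum_scal_l. apply sum_eq. intros i Hi. unfold DD, hh, c.
    rewrite (HG i), (HG (S i)) by lia. field. exact Hv. }
  rewrite HR in HS1a.
  set (q := fun k => G k ^ 2 / F k + G (S k) ^ 2 / F (S (S k)) - 2 * G k * G (S k) / F (S k)).
  assert (Hblk : sum_f_R0 (fun m => DD m * hh m) M <= sum_f_R0 q M).
  { apply sum_Rle. intros i Hi. unfold DD, hh, q.
    destruct (H4 i ltac:(lia)) as [HD Hh].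
    apply block; try (apply HF; lia); try (apply HGp; lia); auto. }
  assert (HQq : sum_f_R0 q M <= Q).
  { unfold Q.
    rewrite (tele (fun k => nb G k ^ 2 / F k) q
       (fun j => match j with O => 0 | S j => G j ^ 2 / F j - G j ^ 2 / F (S j) end) (G 0%nat ^ 2 / F 1%nat)).
    2:{ simpl nb. unfold Rdiv. ring. }
    2:{ intros k. simpl nb. unfold q, Rdiv. ring. }
    rewrite HGn. simpl sum_f_R0 at 2.
    assert (Hq : q (S M) = G (S M) ^ 2 / F (S M)) by (unfold q; rewrite HGn; unfold Rdiv; ring).
    rewrite Hq.
    assert (0 <= G 0%nat ^ 2 / F 1%nat) by (apply div_nonneg; [apply pow2_ge_0| apply HF; lia]).
    assert (0 <= G (S M) ^ 2 / F (S M)) by (apply div_nonneg; [apply pow2_ge_0| apply HF; lia]).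
    replace (0 ^ 2 / F (S (S M)) - 0 ^ 2 / F (S (S (S M)))) with 0 by (unfold Rdiv; ring).
    lra. }
  rewrite HS1a.
  assert (0 <= v^2) by apply pow2_ge_0.
  assert (v * (v * sum_f_R0 (fun m => DD m * hh m) M) - v^2 * Q = v^2 * (sum_f_R0 (fun m => DD m * hh m) M - Q)) by ring.
  nra.
Qed.


Theorem theorem4p4
  (n : nat) (Hn : (1 <= n)%nat) (v : R) (Hv : v <> 0)
  (f alpha : nat -> R -> R)
  (f1 f2 a1 : nat -> R -> R)   (* first/second derivatives of f, derivative of alpha *)
  (HA : in_A n alpha)
  (Hpmf : pmf_family n f)
  (Hpos : forall k t, (k <= n)%nat -> 0 <= t <= 1 -> 0 < f k t)
  (Hf1 : forall k t, (k <= n)%nat -> 0 < t < 1 -> derivable_pt_lim (f k) t (f1 k t))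
  (Hf2 : forall k t, (k <= n)%nat -> 0 < t < 1 -> derivable_pt_lim (f1 k) t (f2 k t))
  (Hf2c : forall k t, (k <= n)%nat -> 0 < t < 1 -> continuity_pt (f2 k) t)
  (Ha1 : forall k t, (k <= n)%nat -> 0 < t < 1 -> derivable_pt_lim (alpha k) t (a1 k t))
  (Ha1c : forall k t, (k <= n)%nat -> 0 < t < 1 -> continuity_pt (a1 k) t)
  (Hode : forall k t, (k <= n)%nat -> 0 < t < 1 -> f1 k t = - v * nabla_g n alpha f k t)
  (ts : R) (Hts : 0 < ts < 1)
  (H1c : forall k, (k < n)%nat -> alpha k ts <= alpha (S k) ts)
  (H3c : forall k, (k + 2 <= n)%nat ->
     alpha (S k) ts * (1 - alpha (S k) ts) * (f (S k) ts)^2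
     - alpha (S (S k)) ts * (1 - alpha k ts) * f k ts * f (S (S k)) ts >= 0)
  (H4c : forall k, (k + 2 <= n)%nat ->
     (f (S k) ts)^2 - f k ts * f (S (S k)) ts > 0 /\
     h_k n v alpha f a1 k ts <= htilde_k n alpha f k ts) :
  exists (H1 : R -> R) (l : R),
    (forall t, 0 < t < 1 -> derivable_pt_lim (entropy n f) t (H1 t)) /\
    derivable_pt_lim H1 ts l /\ l <= 0.
Proof.
  assert (Hts01 : 0 <= ts <= 1) by lra.
  set (d := Rmin ts (1 - ts)).
  assert (Hd : 0 < d) by (apply Rmin_glb_lt; lra).
  assert (Hnear : forall t, Rabs (t - ts) < d -> 0 < t < 1).
  { intros t Ht. assert (d <= ts) by apply Rmin_l. assert (d <= 1 - ts) by apply Rmin_r.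
    apply Rabs_def2 in Ht. lra. }
  exists (fun t => - sum_f_R0 (fun k => f1 k t * (ln (f k t) + 1)) n).
  exists (- sum_f_R0 (fun k => f2 k ts * (ln (f k ts) + 1) + f1 k ts * (f1 k ts / f k ts)) n).
  split; [|split].
  - intros t Ht. unfold entropy. apply dopp.
    apply (dsum (fun k t => f k t * ln (f k t)) (fun k => f1 k t * (ln (f k t) + 1))).
    intros k Hk. apply dulnu. apply Hpos; [auto|lra]. apply Hf1; auto.
  - apply dopp.
    apply (dsum (fun k t => f1 k t * (ln (f k t) + 1))
             (fun k => f2 k ts * (ln (f k ts) + 1) + f1 k ts * (f1 k ts / f k ts))).
    intros k Hk. apply dwln. apply Hpos; [auto|lra]. apply Hf1; auto. apply Hf2; auto.
  - pose (Gd := fun k => if Nat.ltb k n then a1 (S k) ts * f (S k) ts + alpha (S k) ts * f1 (S k) ts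
                   - a1 k ts * f k ts + (1 - alpha k ts) * f1 k ts else 0).
    destruct (HA ts Hts01) as [HA0 [HAn HAr]].
    assert (Hdg : forall k, (k <= n)%nat -> derivable_pt_lim (gfun n alpha f k) ts (Gd k)).
    { intros k Hk. unfold Gd. destruct (Nat.ltb k n) eqn:E.
      - assert (E' := E). apply Nat.ltb_lt in E'.
        apply (dpl_eq (fun t => alpha (S k) t * f (S k) t + (1 - alpha k t) * f k t)).
        { intros t. unfold gfun. rewrite E. reflexivity. }
        eapply dpl_l; [| apply dplus; [apply dmult; [apply Ha1|apply Hf1] | apply dmult; [apply dminus; [apply dconst| apply Ha1] | apply Hf1]]];
          try lia; try lra.
      - apply (dpl_eq (fun _ => 0)). { intros t. unfold gfun. rewrite E. reflexivity. } apply dconst. }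
    assert (Hnab : forall k, (k <= n)%nat ->
              derivable_pt_lim (fun t => - v * nabla_g n alpha f k t) ts (- v * nb Gd k)).
    { intros k Hk. destruct k as [|j].
      - eapply dpl_l; [| apply dmult; [apply dconst| apply (Hdg 0%nat Hk)]]. simpl. ring.
      - eapply dpl_l; [| apply dmult; [apply dconst| apply dminus; [apply (Hdg (S j) Hk)| apply (Hdg j); lia]]].
        simpl. ring. }
    assert (Hcst : forall k c, (k <= n)%nat -> (forall t, 0 <= t <= 1 -> alpha k t = c) -> a1 k ts = 0).
    { intros k c Hk Hc. apply (uniqueness_limite (alpha k) ts). apply Ha1; auto.
      apply (dpl_loc (fun _ => c) _ ts 0 d Hd).
      { intros t Ht. symmetry. apply Hc. specialize (Hnear t Ht). lra. }
      apply dconst. }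
    apply (alg n Hn v Hv (fun k => f k ts) (fun k => alpha k ts) (fun k => a1 k ts)
             (fun k => gfun n alpha f k ts) (fun k => f1 k ts) Gd (fun k => f2 k ts)).
    + intros k Hk. apply Hpos; auto.
    + exact HA0.
    + exact HAn.
    + apply (Hcst 0%nat 0). lia. intros t Ht. apply (HA t Ht).
    + apply (Hcst n 1). lia. intros t Ht. apply (HA t Ht).
    + intros k Hk. unfold gfun. rewrite (proj2 (Nat.ltb_lt k n) Hk). reflexivity.
    + unfold gfun. rewrite Nat.ltb_irrefl. reflexivity.
    + intros k Hk. unfold gfun. rewrite (proj2 (Nat.ltb_lt k n) Hk).
      assert (0 < f k ts) by (apply Hpos; [lia|lra]).
      assert (0 < f (S k) ts) by (apply Hpos; [lia|lra]).
      destruct (HAr k ltac:(lia)). destruct (HAr (S k) ltac:(lia)). nra.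
    + intros k Hk. rewrite (Hode k ts Hk Hts). destruct k; reflexivity.
    + intros k Hk. unfold Gd. rewrite (proj2 (Nat.ltb_lt k n) Hk). reflexivity.
    + unfold Gd. rewrite Nat.ltb_irrefl. reflexivity.
    + intros k Hk. apply (uniqueness_limite (f1 k) ts). apply Hf2; auto.
      apply (dpl_loc (fun t => - v * nabla_g n alpha f k t) _ ts _ d Hd).
      { intros t Ht. symmetry. apply Hode; auto. }
      apply Hnab; auto.
    + intros k Hk. exact (H4c k Hk).
Qed.
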